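(* Let $G$ be a graph of order $n$ such that both $G$ and its complement $\bar G$ are connected. Then $b(G)\, b(\bar G)\leq n+4$, and equality holds if and only if $G$ is (isomorphic to) the cycle $C_5$.
   Context: Burning process on a finite graph $G$: initially all vertices are unburned. In each round, every already burned vertex spreads fire to all of its neighbors, which become burned, and at the same time one chooses an unburned vertex (if any remains) and changes its status to burned; burned vertices remain burned. The burning number $b(G)$ is the minimum number of rounds needed to burn all vertices of $G$. $\bar G$ is the complement graph of $G$. *)

(* Defs.v *)
(* Simple graphs on a finType T given by an adjacency
   relation e : rel T (assumed symmetric and irreflexive in the theorem). *)
From mathcomp Require Import all_boot.
Set Implicit Arguments. Unset Strict Implicit. Unset Printing Implicit Defensive.

Section Burning.
Variable T : finType.

Definition compl (e : rel T) : rel T := fun x y => (x != y) && ~~ e x y.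

Definition gconnected (e : rel T) : Prop := forall x y : T, connect e x y.

Definition spread (e : rel T) (B : {set T}) : {set T} :=
  [set y | (y \in B) || [exists x in B, e x y]].

Fixpoint burn_run (e : rel T) (B : {set T}) (s : seq T) : option {set T} :=
  match s with
  | [::] => Some B
  | x :: s' => if x \in B then None else burn_run e (spread e B :|: [set x]) s'
  end.

Definition burning_seq (e : rel T) (s : seq T) : bool :=
  burn_run e set0 s == Some [set: T].

Definition burnable (e : rel T) (k : nat) : bool :=
  [exists s : k.-tuple T, burning_seq e s].

(* burning number: the minimum number of rounds needed to burn all
   vertices. (The minimum is taken over k <= #|T|; it is always attained
   there, so the default value #|T| of the big min is never relevant.) *)
Definition burning_number (e : rel T) : nat :=
  \big[minn/#|T|]_(k < #|T|.+1 | burnable e k) k.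

End Burning.

Definition c5 : rel 'I_5 :=
  fun x y => (x.+1 %% 5 == y) || (y.+1 %% 5 == x).

Definition iso_C5 (T : finType) (e : rel T) : Prop :=
  exists f : T -> 'I_5, bijective f /\ forall x y, e x y = c5 (f x) (f y).

(* Main.v *)
Require Import Defs.
From mathcomp Require Import all_boot.
From mathcomp Require Import zify.
Set Implicit Arguments. Unset Strict Implicit. Unset Printing Implicit Defensive.

Fixpoint hasb {A} (f : A -> bool) (s : seq A) := match s with [::] => false | x :: s' => if f x then true else hasb f s' end.
Fixpoint allb {A} (f : A -> bool) (s : seq A) := match s with [::] => true | x :: s' => if f x then allb f s' else false end.
Lemma hasbE A (f : A -> bool) s : hasb f s = has f s.
Proof. by elim: s => //= x s ->; case: (f x). Qed.
Lemma allbE A (f : A -> bool) s : allb f s = all f s.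
Proof. by elim: s => //= x s ->; case: (f x). Qed.

Definition A8 (l : seq nat) i j := if (i < 7) && (nth 0 l i == j) then true else (j < 7) && (nth 0 l j == i).
Definition n1 l a i := if a == i then true else A8 l a i.
Definition n2 l a i := hasb (fun j => if n1 l a j then n1 l j i else false) (iota 0 8).
Definition ok8 l := hasb (fun a => hasb (fun b => hasb (fun c => allb (fun i => if n2 l a i then true else if n1 l b i then true else i == c) (iota 0 8)) (iota 0 8)) (iota 0 8)) (iota 0 8).
Fixpoint gen (m i : nat) : seq (seq nat) := match m with 0 => [:: [::]] | m'.+1 => [seq j :: t | j <- iota i.+1 (7 - i), t <- gen m' i.+1] end.
Lemma all_ok : allb ok8 (gen 7 0). Proof. by vm_compute. Qed.

Lemma mem_gen m : forall i l, size l = m -> (forall p, p < m -> i + p < nth 0 l p <= 7) -> l \in gen m i.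
Proof.
elim: m => [|m IH] i [|j t] //= [Hs] H.
apply: (allpairs_f (fun j t => j :: t)).
  rewrite mem_iota; have := H 0 isT; rewrite /= addn0; lia.
apply: IH => // p Hp; have := H p.+1 Hp; rewrite /=; lia.
Qed.

Lemma ok8P l : ok8 l -> exists a b c, [/\ a < 8, b < 8 &
   forall i, i < 8 -> n2 l a i \/ n1 l b i \/ i = c].
Proof.
rewrite /ok8 hasbE => /hasP [a]; rewrite mem_iota => Ha.
rewrite hasbE => /hasP [b]; rewrite mem_iota => Hb.
rewrite hasbE => /hasP [c]; rewrite mem_iota => Hc.
rewrite allbE => /allP H; exists a, b, c; split => //; try lia.
move=> i Hi; have := H i; rewrite mem_iota => /(_ ltac:(lia)).
case: (n2 l a i); first by left.
case: (n1 l b i); first by right; left.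
by move/eqP; right; right.
Qed.

Lemma n1P l a i : n1 l a i -> a = i \/ (a < 7 /\ nth 0 l a = i) \/ (i < 7 /\ nth 0 l i = a).
Proof.
rewrite /n1 /A8; case: eqP => [->|_]; first by left.
case: ifP => [/andP [H1 /eqP H2] _ | _ /andP [H1 /eqP H2]]; right; [left|right]; done.
Qed.

Lemma n2P l a i : n2 l a i -> exists j, n1 l a j /\ n1 l j i.
Proof.
rewrite /n2 hasbE => /hasP [j _]; case: ifP => // H1 H2; by exists j.
Qed.


Section G.
Variable T : finType.
Variable e : rel T.

Lemma spreadP (B : {set T}) y : reflect (y \in B \/ exists2 x, x \in B & e x y) (y \in spread e B).
Proof.
rewrite inE; apply: (iffP orP) => [[H|/existsP [x /andP [H1 H2]]]|[H|[x H1 H2]]].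
- by left.
- by right; exists x.
- by left.
- by right; apply/existsP; exists x; rewrite H1.
Qed.

Lemma sub_spread (B : {set T}) : B \subset spread e B.
Proof. by apply/subsetP => x H; apply/spreadP; left. Qed.

Lemma spreadS (A B : {set T}) : A \subset B -> spread e A \subset spread e B.
Proof.
move/subsetP => H; apply/subsetP => y /spreadP [Hy|[x Hx Hxy]]; apply/spreadP.
  by left; apply: H.
by right; exists x => //; apply: H.
Qed.

Lemma spread0 : spread e set0 = set0.
Proof. apply/setP => y; rewrite [RHS]inE; apply/spreadP; case => [|[x]]; by rewrite inE. Qed.

Definition bf : {set T} -> seq T -> {set T} := foldl (fun B x => spread e B :|: [set x]).

Lemma bf_rcons B s z : bf B (rcons s z) = spread e (bf B s) :|: [set z].
Proof. by rewrite /bf foldl_rcons. Qed.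

Lemma repair (s : seq T) : forall B B' : {set T}, B \subset B' -> bf B s = setT ->
  exists t, size t <= size s /\ burn_run e B' t = Some setT.
Proof.
elim: s => [|x s IH] B B' HB /=.
  move=> HT; exists [::]; split => //=; congr Some.
  by apply/eqP; rewrite eqEsubset subsetT -HT.
move=> Hbf.
have [HT|HT] := eqVneq B' setT.
  by exists [::]; split => //; rewrite HT.
have [y Hy] : exists y, y \notin B'.
  apply/existsP; move: HT; apply: contraR; rewrite negb_exists => /forallP H.
  by apply/eqP/setP => z; rewrite inE; move: (H z); rewrite negbK.
pose c := if x \in B' then y else x.
have Hc : c \notin B' by rewrite /c; case: ifP => // ->.
have HB1 : spread e B :|: [set x] \subset spread e B' :|: [set c].
  apply/subsetP => z; rewrite !in_setU !in_set1 => /orP [Hz|/eqP ->].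
    by rewrite (subsetP (spreadS HB)).
  rewrite /c; case: ifP => Hx; last by rewrite eqxx orbT.
  by rewrite (subsetP (sub_spread B')).
have [t [Ht Hrun]] := IH _ _ HB1 Hbf.
exists (c :: t); split => //=; by rewrite (negbTE Hc).
Qed.

Lemma run_size (t : seq T) : forall B C, burn_run e B t = Some C -> size t <= #|~: B|.
Proof.
elim: t => [|c t IH] B C //= .
case: ifP => // Hc /IH H.
apply: leq_ltn_trans H _; apply: proper_card; rewrite properE; apply/andP; split.
  by apply/subsetP => z; rewrite !in_setC in_setU; apply: contra => Hz; rewrite (subsetP (sub_spread B)).
by apply/subsetPn; exists c; rewrite !in_setC ?in_setU ?in_set1 ?Hc ?eqxx ?orbT.
Qed.

Lemma bigmin_seq_le (I : eqType) (j : I) (r : seq I) (P : pred I) F x :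
  j \in r -> P j -> \big[minn/x]_(i <- r | P i) F i <= F j.
Proof.
elim: r => [|a r IH] //=; rewrite inE big_cons => /orP [/eqP <- ->|Hj Pj].
  exact: geq_minl.
case: ifP => _; last exact: IH.
by rewrite geq_min IH ?orbT.
Qed.

Lemma bn_le (s : seq T) : bf set0 s = setT -> burning_number e <= size s.
Proof.
move=> H; have [t [Ht Hrun]] := repair (sub0set set0) H.
have Htn : size t < #|T|.+1.
  by have := run_size Hrun; rewrite setC0 cardsT.
have Hb : burnable e (size t).
  by apply/existsP; exists (in_tuple t); rewrite /burning_seq /= Hrun.
apply: leq_trans Ht; rewrite /burning_number.
exact: (@bigmin_seq_le _ (Ordinal Htn) _ (fun k : 'I_#|T|.+1 => burnable e k) (fun k : 'I_#|T|.+1 => nat_of_ord k) #|T| (mem_index_enum (Ordinal Htn)) Hb).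
Qed.

Lemma bn_le_card : burning_number e <= #|T|.
Proof.
rewrite /burning_number; apply: (big_ind (fun v => v <= #|T|)) => //.
  by move=> a b Ha Hb; rewrite geq_min Ha.
by move=> i _; rewrite -ltnS.
Qed.

Lemma bn_ge m : m <= #|T| -> (forall k, k < m -> ~~ burnable e k) -> m <= burning_number e.
Proof.
move=> Hm H; rewrite /burning_number; apply: (big_ind (fun v => m <= v)) => //.
  by move=> a b Ha Hb; rewrite leq_min Ha.
move=> i Hi; rewrite leqNgt; apply/negP => /H; by rewrite Hi.
Qed.

End G.


Section C.
Variable T : finType.
Variable e : rel T.
Hypothesis esym : symmetric e.

Inductive conn : {set T} -> Prop :=
| conn1 x : conn [set x]
| connU x S : conn S -> x \notin S -> (exists2 y, y \in S & e x y) -> conn (x |: S).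

Definition remv (S : {set T}) c := [/\ c \in S, conn (S :\ c) & exists2 y, y \in S :\ c & e c y].

Lemma conn_card S : conn S -> 0 < #|S|.
Proof. by case => [x|x S0 _ Hx _]; rewrite ?cards1 ?cardsU1 ?Hx. Qed.

Lemma setU1D1 (x c : T) (S : {set T}) : x != c -> (x |: S) :\ c = x |: (S :\ c).
Proof. move=> Hxc; apply/setP => z; rewrite !inE; case: (eqVneq z x) => [->|] //=; by rewrite Hxc. Qed.

Lemma two_rem S : conn S -> 2 <= #|S| -> exists a b, [/\ a != b, remv S a & remv S b].
Proof.
elim => [x|x S0 H0 IH Hx [y Hy Hxy]]; first by rewrite cards1.
move=> _; have HS0 := conn_card H0.
have Hxy' : x != y by apply: contraNneq Hx => ->.
have remx : remv (x |: S0) x.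
  split; first by rewrite setU11.
    by rewrite setU1K.
  by exists y => //; rewrite setU1K.
case: (leqP 2 #|S0|) => H2.
  have [a [b [Hab [Ha1 Ha2 Ha3] [Hb1 Hb2 Hb3]]]] := IH H2.
  pose c := if a == y then b else a.
  have Hcy : c != y by rewrite /c; case: (eqVneq a y) => [Hay|Hay] //; rewrite -Hay eq_sym.
  have HcS : c \in S0 by rewrite /c; case: ifP.
  have Hxc : x != c by apply: contraNneq Hx => ->.
  have Hrc : remv S0 c by rewrite /c; case: ifP.
  case: Hrc => _ Hc2 [w Hw Hcw].
  exists x, c; split => //; split.
  - by rewrite setU1r.
  - rewrite setU1D1 //; apply: connU => //; first by rewrite !inE negb_and negbK Hx orbT.
    by exists y => //; rewrite !inE Hy andbT eq_sym.
  - by exists w => //; rewrite setU1D1 // setU1r.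
have /cards1P [z Hz] : #|S0| == 1 by rewrite eqn_leq HS0 -ltnS H2.
move: Hy; rewrite Hz inE => /eqP Hyz; subst z.
rewrite Hz in remx; exists x, y; split => //; split.
- by rewrite !inE eqxx ?orbT.
- have -> : (x |: [set y]) :\ y = [set x].
    apply/setP => z; rewrite !inE; case: (eqVneq z y) => [->|Hzy] /=; first by rewrite eq_sym (negbTE Hxy').
    by rewrite orbF.
  exact: conn1.
- exists x; last by rewrite esym.
  by rewrite !inE eqxx andbT.
Qed.

End C.


Section S.
Variable T : finType.
Variable e : rel T.
Hypothesis esym : symmetric e.

Lemma card_le1 (R : {set T}) (d : T) : #|R| <= 1 -> exists z, R \subset [set z].
Proof.
case: (posnP #|R|) => [/eqP|H0 H1].
  by rewrite cards_eq0 => /eqP ->; exists d; rewrite sub0set.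
have /cards1P [z ->] : #|R| == 1 by rewrite eqn_leq H1 H0.
by exists z.
Qed.

Lemma in_spread_e (B : {set T}) x y : x \in B -> e x y -> y \in spread e B.
Proof. by move=> Hx Hxy; apply/spreadP; right; exists x. Qed.

Lemma in_spread_B (B : {set T}) x : x \in B -> x \in spread e B.
Proof. by move=> Hx; apply/spreadP; left. Qed.

Lemma step S : conn e S -> exists S' z, [/\ conn e S', #|S'| + 3 <= #|S| \/ #|S'| = 1 &
   S \subset spread e S' :|: [set z]].
Proof.
move=> HS; case: (leqP 4 #|S|) => H4.
  have [a1 [_ [_ [Ha1 Hc1 [w1 Hw1 He1]] _]]] := two_rem esym HS (leq_trans (isT : 2 <= 4) H4).
  have E1 := cardsD1 a1 S; rewrite Ha1 in E1.
  have [a2 [_ [_ [Ha2 Hc2 [w2 Hw2 He2]] _]]] := two_rem esym Hc1 ltac:(lia).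
  have E2 := cardsD1 a2 (S :\ a1); rewrite Ha2 in E2.
  have [a [b [Hab Hra Hrb]]] := two_rem esym Hc2 ltac:(lia).
  pose a3 := if a == w2 then b else a.
  have Ha3w : a3 != w2 by rewrite /a3; case: (eqVneq a w2) => [Hay|Hay] //; rewrite -Hay eq_sym.
  have Hr3 : remv e (S :\ a1 :\ a2) a3 by rewrite /a3; case: ifP.
  case: Hr3 => Ha3 Hc3 [w3 Hw3 He3].
  have E3 := cardsD1 a3 (S :\ a1 :\ a2); rewrite Ha3 in E3.
  exists (S :\ a1 :\ a2 :\ a3), a1; split => //; first by left; lia.
  apply/subsetP => x Hx; rewrite in_setU in_set1.
  case: (eqVneq x a1) => [->|Hxa1]; first by rewrite orbT.
  rewrite orbF.
  case: (eqVneq x a2) => [->|Hxa2].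
    apply: (in_spread_e (x := w2)); last by rewrite esym.
    by rewrite in_setD1 Hw2 andbT eq_sym.
  case: (eqVneq x a3) => [->|Hxa3].
    by apply: (in_spread_e (x := w3)); last by rewrite esym.
  by apply: in_spread_B; rewrite !in_setD1 Hxa1 Hxa2 Hxa3.
case: (leqP 2 #|S|) => H2.
  have [a [_ [_ [Ha Hc [y Hy He]] _]]] := two_rem esym HS H2.
  have Ey := cardsD1 y (S :\ a); rewrite Hy in Ey.
  have Ea := cardsD1 a S; rewrite Ha in Ea.
  have [z Hz] := card_le1 a (R := S :\ a :\ y) ltac:(lia).
  exists [set a], z; split; [exact: conn1 | by right; rewrite cards1 |].
  apply/subsetP => x Hx; rewrite in_setU.
  case: (eqVneq x a) => [->|Hxa]; first by rewrite in_spread_B ?set11.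
  case: (eqVneq x y) => [->|Hxy]; first by rewrite (in_spread_e (x := a)) ?set11.
  by rewrite (subsetP Hz) ?orbT // !in_setD1 Hxa Hxy.
have /cards1P [w Hw] : #|S| == 1 by have := conn_card HS; lia.
exists S, w; split => //; first by right; rewrite Hw cards1.
by apply/subsetP => x Hx; rewrite in_setU in_spread_B.
Qed.

End S.


Section B.
Variable T : finType.
Variable e : rel T.
Hypothesis esy : symmetric e.

Lemma conn_seq S (d : T) : conn e S -> exists s, [/\ uniq s, S = [set x in s] &
  forall i, i.+1 < size s -> exists j, i < j < size s /\ e (nth d s i) (nth d s j)].
Proof.
elim => [x|x S0 H0 [s [Hu HS Ha]] Hx [y Hy Hxy]].
  exists [:: x]; split => //; first by apply/setP => z; rewrite !inE.
have Hxs : x \notin s by move: Hx; rewrite HS inE.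
exists (x :: s); split; first by rewrite /= Hxs.
  by apply/setP => z; rewrite HS !inE.
case => [_|i Hi].
  have Hys : y \in s by move: Hy; rewrite HS inE.
  exists (index y s).+1; split; first by rewrite /= ltnS index_mem.
  by rewrite /= nth_index.
have [j [Hj Hej]] := Ha i Hi; exists j.+1; split => //.
Qed.

Lemma base8 S : conn e S -> #|S| = 8 -> exists a b c, S \subset bf e set0 [:: a; b; c].
Proof.
move=> HS H8.
have [d Hd] : exists d, d \in S by apply/set0Pn; rewrite -card_gt0 H8.
have [s [Hu HSs Ha]] := conn_seq d HS.
have Hsz : size s = 8 by rewrite -H8 HSs cardsE; apply/esym/card_uniqP.
pose y i := nth d s i.
pose pr i := fun j => (i < j) && e (y i) (y j).
pose l := mkseq (fun i => nth 0 (iota 0 8) (find (pr i) (iota 0 8))) 7.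
have Hl : forall i, i < 7 -> i < nth 0 l i <= 7 /\ e (y i) (y (nth 0 l i)).
  move=> i Hi; rewrite /l nth_mkseq //.
  have Hh : has (pr i) (iota 0 8).
    have [j [Hj Hej]] := Ha i ltac:(rewrite Hsz; lia).
    apply/hasP; exists j; first by rewrite mem_iota; lia.
    by rewrite /pr; apply/andP; split => //; lia.
  have Hf : find (pr i) (iota 0 8) < 8 by rewrite -[8]/(size (iota 0 8)) -has_find.
  have := nth_find 0 Hh; rewrite /pr nth_iota // add0n => /andP [H1 H2].
  move: Hf H1 H2; rewrite /pr; set f := find _ _ => Hf H1 H2.
  by split => //; lia.
have Hgen : l \in gen 7 0.
  apply: mem_gen; first by rewrite size_mkseq.
  by move=> p Hp; have [] := Hl p Hp.
have /ok8P [a [b [c [Ha8 Hb8 Hcov]]]] : ok8 l.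
  by have := all_ok; rewrite allbE => /allP; apply.
have Htr : forall j i, n1 l j i -> y i \in spread e [set y j].
  move=> j i /n1P [->|[[Hj <-]|[Hi <-]]].
  - by apply: in_spread_B; rewrite set11.
  - by apply: (in_spread_e (x := y j)); rewrite ?set11 //; case: (Hl j Hj).
  - by apply: (in_spread_e (x := y (nth 0 l i))); rewrite ?set11 // esy; case: (Hl i Hi).
exists (y a), (y b), (y c); rewrite /= spread0 set0U.
apply/subsetP => x; rewrite HSs inE => Hx.
have Hi : index x s < 8 by rewrite -Hsz index_mem.
have Hyi : y (index x s) = x by rewrite /y nth_index.
rewrite -Hyi; case: (Hcov _ Hi) => [/n2P [k [Hk1 Hk2]]|[Hb|->]]; rewrite in_setU.
- apply/orP; left; apply: (subsetP (spreadS e (A := spread e [set y a]) _)).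
    by apply/subsetP => z Hz; rewrite in_setU Hz.
  by apply: (subsetP (spreadS e (A := [set y k]) _)) (Htr _ _ Hk2); rewrite sub1set; apply: Htr.
- apply/orP; left; apply: (subsetP (spreadS e (A := [set y b]) _)) (Htr _ _ Hb).
  by rewrite sub1set in_setU set11 orbT.
- by rewrite set11 orbT.
Qed.

Lemma cover_main k : forall S, conn e S -> (#|S| + 2 <= 3 * k \/ (3 <= k /\ #|S| + 1 <= 3 * k)) ->
  exists s, size s = k /\ S \subset bf e set0 s.
Proof.
elim: k => [|k IH] S HS Hk.
  by have := conn_card HS; lia.
case: (posnP k) => [Hk0|Hk0].
  subst k; have /cards1P [x Hx] : #|S| == 1 by have := conn_card HS; lia.
  by exists [:: x]; split => //; rewrite Hx /= spread0 set0U.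
case: (eqVneq k 2) => [Hk2|Hk2]; first case: (eqVneq #|S| 8) => [H8|H8].
- have [a [b [c Habc]]] := base8 HS H8.
  by exists [:: a; b; c]; split => //; rewrite Hk2.
all: have [S' [z [HS' Hcard Hsub]]] := step esy HS.
all: have [s [Hs Hs']] : exists s, size s = k /\ S' \subset bf e set0 s
       by apply: IH => //; have := conn_card HS'; lia.
all: exists (rcons s z); split; first by rewrite size_rcons Hs.
all: rewrite bf_rcons; apply: (subset_trans Hsub).
all: apply/subsetP => x; rewrite !in_setU => /orP [Hx|->]; last by rewrite orbT.
all: by rewrite (subsetP (spreadS e Hs') _ Hx).
Qed.

End B.


Section M.
Variable T : finType.

Lemma cross (e : rel T) (A : {set T}) x y : x \in A -> y \notin A -> connect e x y ->
  exists u v, [/\ u \in A, v \notin A & e u v].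
Proof.
move=> Hx Hy /connectP [p Hp Hl]; subst y.
elim: p x Hx Hp Hy => [|z p IH] x Hx /=; first by rewrite Hx.
move=> /andP [Hxz Hp] Hl; case: (boolP (z \in A)) => Hz.
  exact: IH Hz Hp Hl.
by exists x, z.
Qed.

Lemma closed_false (e : rel T) (C : {set T}) x y : gconnected e -> x \in C -> y \notin C ->
  (forall u v, u \in C -> e u v -> v \in C) -> False.
Proof.
move=> Hc Hx Hy Hcl; have [u [v [Hu Hv He]]] := cross Hx Hy (Hc x y).
by move: Hv; rewrite (Hcl u v Hu He).
Qed.

Lemma conn_full (e : rel T) : symmetric e -> gconnected e -> forall x : T, conn e [set: T].
Proof.
move=> esy Hc x.
suff : forall m S, conn e S -> #|~: S| = m -> conn e [set: T].
  by move/(_ _ [set x] (conn1 e x) erefl).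
elim => [|m IH] S HS Hm.
  move: Hm => /eqP; rewrite cards_eq0 => /eqP H.
  by have <- : S = [set: T] by rewrite -(setCK S) H setC0.
have [v Hv] : exists v, v \in ~: S by apply/set0Pn; rewrite -card_gt0 Hm.
have [u Hu] : exists u, u \in S by apply/set0Pn; rewrite -card_gt0; exact: conn_card HS.
rewrite in_setC in Hv.
have [u' [v' [Hu' Hv' He]]] := cross Hu Hv (Hc u v).
apply: (IH (v' |: S)).
  by apply: connU => //; exists u' => //; rewrite esy.
have := cardsC (v' |: S); have := cardsC S; rewrite cardsU1 Hv' Hm; lia.
Qed.

Lemma ub (e : rel T) k (x : T) : symmetric e -> gconnected e ->
  (#|T| + 2 <= 3 * k \/ (3 <= k /\ #|T| + 1 <= 3 * k)) -> burning_number e <= k.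
Proof.
move=> esy Hc Hk.
have [s [Hs Hsub]] := cover_main esy (conn_full esy Hc x) (k := k) ltac:(by rewrite cardsT).
rewrite -Hs; apply: bn_le; apply/eqP; rewrite eqEsubset subsetT; exact: Hsub.
Qed.

Lemma cover3 (e : rel T) u : (forall w, w \in spread e (spread e [set u])) -> burning_number e <= 3.
Proof.
move=> H; apply: (@bn_le _ _ [:: u; u; u]); apply/eqP; rewrite eqEsubset subsetT /=.
apply/subsetP => w _; rewrite spread0 set0U in_setU; apply/orP; left.
apply: (subsetP (spreadS e (A := spread e [set u]) _)) (H w).
by apply/subsetP => z Hz; rewrite in_setU Hz.
Qed.

Lemma low_deg (e1 e2 : rel T) x : (forall x y, x != y -> e1 x y || e2 x y) ->
  #|[set y | e1 x y]| <= 1 -> 1 < #|T| -> burning_number e2 <= 2.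
Proof.
move=> Hc Hd Hn.
have [y [Hyx Hy]] : exists y, y != x /\ forall w, w != x -> e1 x w -> w = y.
  have HR : #|[set y | e1 x y] :\ x| <= 1.
    by apply: leq_trans Hd; apply: subset_leq_card; apply: subD1set.
  case: (posnP #|[set y | e1 x y] :\ x|) => [/eqP|H0].
    rewrite cards_eq0 => /eqP H0.
    have [z Hz] : exists z, z \in [set: T] :\ x.
      by apply/set0Pn; rewrite -card_gt0; have := cardsD1 x [set: T]; rewrite in_setT cardsT; lia.
    exists z; split; first by move: Hz; rewrite !inE => /andP [].
    move=> w Hw He; have : w \in [set y | e1 x y] :\ x by rewrite !inE Hw He.
    by rewrite H0 inE.
  have /cards1P [z Hz] : #|[set y | e1 x y] :\ x| == 1 by lia.
  have Hz' : z \in [set y | e1 x y] :\ x by rewrite Hz set11.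
  exists z; split; first by move: Hz'; rewrite !inE => /andP [].
  move=> w Hw He; have : w \in [set y | e1 x y] :\ x by rewrite !inE Hw He.
  by rewrite Hz inE => /eqP.
apply: (@bn_le _ _ [:: x; y]); apply/eqP; rewrite eqEsubset subsetT /=.
apply/subsetP => w _; rewrite spread0 set0U in_setU in_set1.
case: (eqVneq w y) => [_|Hwy]; first by rewrite orbT.
case: (eqVneq w x) => [->|Hwx]; first by rewrite in_spread_B ?set11.
have := Hc x w; rewrite eq_sym => /(_ Hwx) /orP [H|H].
  by move: Hwy; rewrite (Hy w Hwx H) eqxx.
by rewrite (in_spread_e (x := x)) ?set11.
Qed.

Lemma diam3 (e1 e2 : rel T) u v : (forall x y, x != y -> e1 x y || e2 x y) ->
  symmetric e1 -> symmetric e2 -> u != v -> ~~ e1 u v -> (forall w, ~~ (e1 u w && e1 w v)) ->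
  burning_number e2 <= 3.
Proof.
move=> Hc s1 s2 Huv H1 Hw; apply: (cover3 (u := u)) => w.
have Hv : v \in spread e2 [set u].
  by apply: (in_spread_e (x := u)); rewrite ?set11 //; move: (Hc u v Huv); rewrite (negbTE H1).
case: (eqVneq w v) => [->|Hwv]; first exact: in_spread_B.
case: (eqVneq w u) => [->|Hwu]; first by do 2 apply: in_spread_B; rewrite set11.
case: (boolP (e2 u w)) => H2.
  by apply: in_spread_B; apply: (in_spread_e (x := u)); rewrite ?set11.
have Heuw : e1 u w by move: (Hc u w); rewrite eq_sym Hwu (negbTE H2) orbF; apply.
have Hwv' : ~~ e1 w v by move: (Hw w); rewrite Heuw.
apply: (in_spread_e (x := v)) => //; rewrite s2.
by move: (Hc w v Hwv); rewrite (negbTE Hwv').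
Qed.

Lemma deg_sum (e : rel T) x : irreflexive e ->
  #|[set y | e x y]| + #|[set y | compl e x y]| = #|T| - 1.
Proof.
move=> eirr.
have -> : [set y | compl e x y] = (~: [set y | e x y]) :\ x.
  by apply/setP => y; rewrite !inE /compl eq_sym.
have := cardsD1 x (~: [set y | e x y]); rewrite !inE eirr /= add1n => H1.
have := cardsC [set y | e x y]; rewrite H1 => H2; rewrite -H2; lia.
Qed.

Lemma far6 (e : rel T) u v : symmetric e -> irreflexive e -> u != v -> ~~ e u v ->
  (forall w, ~~ (e u w && e w v)) -> 2 <= #|[set y | e u y]| -> 2 <= #|[set y | e v y]| ->
  6 <= #|T|.
Proof.
move=> esy eirr Huv H1 Hw Du Dv.
pose Nu := u |: [set y | e u y]; pose Nv := v |: [set y | e v y].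
have Cu : #|Nu| = #|[set y | e u y]|.+1 by rewrite /Nu cardsU1 inE eirr.
have Cv : #|Nv| = #|[set y | e v y]|.+1 by rewrite /Nv cardsU1 inE eirr.
have D : Nu :&: Nv = set0.
  apply/setP => z; rewrite !inE; apply/negP => /andP [/orP [/eqP Hz|Hz] /orP [/eqP Hz'|Hz']].
  - by move: Huv; rewrite -Hz -Hz' eqxx.
  - by move: H1; rewrite -Hz esy Hz'.
  - by move: H1; rewrite -Hz' Hz.
  - by move: (Hw z); rewrite Hz (esy z v) Hz'.
have := cardsU Nu Nv; rewrite D cards0 Cu Cv.
have := subset_leq_card (subsetT (Nu :|: Nv)); rewrite cardsT => A B; rewrite B in A; apply: leq_trans A; rewrite subn0 addSn addnS; apply: (leq_add Du Dv).
Qed.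

Lemma lb3 (e : rel T) : 3 <= #|T| -> (forall x y, exists w, w \notin spread e [set x] /\ w != y) ->
  3 <= burning_number e.
Proof.
move=> H3 H; apply: bn_ge => // k Hk; apply/negP => /existsP [[s Hs]].
have /card_gt0P [x0 _] : 0 < #|T| by apply: leq_trans H3.
rewrite /burning_seq /=; move: Hs; case: s => [|x [|y [|z s]]] //= Hs; rewrite ?in_set0 /= ?spread0 ?set0U.
- by move/eqP => [] /setP /(_ x0); rewrite !inE.
- have [w [Hw _]] := H x x.
  move/eqP => [] /setP /(_ w); rewrite in_setT => Hw'.
  by move: Hw; rewrite in_spread_B // Hw'.
- case: ifP => // _; have [w [Hw Hwy]] := H x y.
  move/eqP => [] /setP /(_ w); rewrite in_setT in_setU in_set1 (negbTE Hw) (negbTE Hwy).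
  done.
- by move: Hs Hk => /eqP <-.
Qed.

End M.


Section C5.
Variable T : finType.

Lemma two_set (A : {set T}) a b : #|A| = 2 -> a \in A -> b \in A -> a != b -> A = [set a; b].
Proof.
move=> H2 Ha Hb Hab; apply/eqP; rewrite eq_sym eqEcard H2 cards2 Hab andbT.
by rewrite subUset !sub1set Ha Hb.
Qed.

Lemma other (A : {set T}) z : #|A| = 2 -> z \in A -> exists w, w != z /\ A = [set z; w].
Proof.
move=> H2 Hz; have /cards2P [a [b [Hab HA]]] : #|A| == 2 by rewrite H2.
case: (eqVneq z a) => [Hza|Hza].
  exists b; split; first by rewrite Hza eq_sym.
  by apply: two_set => //; [rewrite HA !inE eqxx orbT | rewrite Hza].
exists a; split; first by rewrite eq_sym.
by apply: two_set => //; rewrite HA !inE eqxx.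
Qed.

Lemma closed_false2 (e : rel T) (C : {set T}) x : gconnected e -> x \in C -> #|C| < #|T| ->
  (forall u, u \in C -> [set y | e u y] \subset C) -> False.
Proof.
move=> Hc Hx HC Hcl.
have [y Hy] : exists y, y \notin C.
  apply/existsP; move: HC; apply: contraTT; rewrite negb_exists => /forallP H.
  rewrite -leqNgt; apply: subset_leq_card; apply/subsetP => z _; move: (H z); by rewrite negbK.
apply: (closed_false Hc Hx Hy) => u v Hu He; apply: (subsetP (Hcl u Hu)); by rewrite inE.
Qed.

Lemma cardsq (s : seq T) : #|[set x in s]| <= size s.
Proof. by rewrite cardsE card_size. Qed.

Lemma c5_build (e : rel T) : symmetric e -> irreflexive e -> gconnected e -> #|T| = 5 ->
  (forall x, #|[set y | e x y]| = 2) -> iso_C5 e.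
Proof.
move=> esy eirr Hc H5 Hd.
have eN : forall a b, e a b = (b \in [set y | e a y]) by move=> a b; rewrite inE.
have ne : forall a b, e a b -> a != b by move=> a b; apply: contraTneq => ->; rewrite eirr.
have /card_gt0P [x0 _] : 0 < #|T| by rewrite H5.
have /cards2P [x1 [x4 [d14 N0]]] : #|[set y | e x0 y]| == 2 by rewrite Hd.
have e01 : e x0 x1 by rewrite eN N0 !inE eqxx.
have e04 : e x0 x4 by rewrite eN N0 !inE eqxx orbT.
have [x2 [d02' N1]] := other (Hd x1) (z := x0) ltac:(by rewrite inE esy).
have [x3 [d03' N4]] := other (Hd x4) (z := x0) ltac:(by rewrite inE esy).
have e12 : e x1 x2 by rewrite eN N1 !inE eqxx orbT.
have e43 : e x4 x3 by rewrite eN N4 !inE eqxx orbT.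
have d01 := ne _ _ e01; have d04 := ne _ _ e04; have d12 := ne _ _ e12; have d34' := ne _ _ e43.
have d02 : x0 != x2 by rewrite eq_sym.
have d03 : x0 != x3 by rewrite eq_sym.
have d34 : x3 != x4 by rewrite eq_sym.
have d24 : x2 != x4.
  apply/negP => /eqP E; subst x2.
  have : x1 \in [set y | e x4 y] by rewrite inE esy.
  rewrite N4 !inE eq_sym (negbTE d01) /= => /eqP E; subst x3.
  apply: (closed_false2 (C := [set x in [:: x0; x1; x4]]) (x := x0) Hc); first by rewrite !inE eqxx.
    by apply: leq_ltn_trans (cardsq _) _; rewrite H5.
  move=> u; rewrite !inE => /orP [/eqP ->|/orP [/eqP ->|/eqP ->]];
    rewrite ?N0 ?N1 ?N4 subUset !sub1set !inE !eqxx ?orbT //.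
have d13 : x1 != x3.
  apply/negP => /eqP E; subst x3.
  have : x4 \in [set y | e x1 y] by rewrite inE esy.
  by rewrite N1 !inE eq_sym (negbTE d04) /= eq_sym (negbTE d24).
have d23 : x2 != x3.
  apply/negP => /eqP E; subst x3.
  have N2 : [set y | e x2 y] = [set x1; x4].
    by apply: two_set => //; rewrite inE esy.
  apply: (closed_false2 (C := [set x in [:: x0; x1; x2; x4]]) (x := x0) Hc); first by rewrite !inE eqxx.
    by apply: leq_ltn_trans (cardsq _) _; rewrite H5.
  move=> u; rewrite !inE => /orP [/eqP ->|/orP [/eqP ->|/orP [/eqP ->|/eqP ->]]];
    rewrite ?N0 ?N1 ?N2 ?N4 subUset !sub1set !inE !eqxx ?orbT //.
have D01 : (x0 == x1) = false by apply/negbTE; rewrite d01.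
have D02 : (x0 == x2) = false by apply/negbTE; rewrite d02.
have D03 : (x0 == x3) = false by apply/negbTE; rewrite d03.
have D04 : (x0 == x4) = false by apply/negbTE; rewrite d04.
have D10 : (x1 == x0) = false by apply/negbTE; rewrite eq_sym d01.
have D12 : (x1 == x2) = false by apply/negbTE; rewrite d12.
have D13 : (x1 == x3) = false by apply/negbTE; rewrite d13.
have D14 : (x1 == x4) = false by apply/negbTE; rewrite d14.
have D20 : (x2 == x0) = false by apply/negbTE; rewrite eq_sym d02.
have D21 : (x2 == x1) = false by apply/negbTE; rewrite eq_sym d12.
have D23 : (x2 == x3) = false by apply/negbTE; rewrite d23.
have D24 : (x2 == x4) = false by apply/negbTE; rewrite d24.
have D30 : (x3 == x0) = false by apply/negbTE; rewrite eq_sym d03.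
have D31 : (x3 == x1) = false by apply/negbTE; rewrite eq_sym d13.
have D32 : (x3 == x2) = false by apply/negbTE; rewrite eq_sym d23.
have D34 : (x3 == x4) = false by apply/negbTE; rewrite d34.
have D40 : (x4 == x0) = false by apply/negbTE; rewrite eq_sym d04.
have D41 : (x4 == x1) = false by apply/negbTE; rewrite eq_sym d14.
have D42 : (x4 == x2) = false by apply/negbTE; rewrite eq_sym d24.
have D43 : (x4 == x3) = false by apply/negbTE; rewrite eq_sym d34.
have Hall : forall x, x = x0 \/ x = x1 \/ x = x2 \/ x = x3 \/ x = x4.
  have HS : [set x in [:: x0; x1; x2; x3; x4]] = [set: T].
    have Hu : uniq [:: x0; x1; x2; x3; x4].
      rewrite /= !inE ?D01 ?D02 ?D03 ?D04 ?D10 ?D12 ?D13 ?D14 ?D20 ?D21 ?D23 ?D24 ?D30 ?D31 ?D32 ?D34 ?D40 ?D41 ?D42 ?D43.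
      done.
    apply/eqP; rewrite eqEcard subsetT cardsT H5 cardsE; move/card_uniqP: Hu => ->.
    by [].
  move=> x; have : x \in [set x in [:: x0; x1; x2; x3; x4]] by rewrite HS.
  rewrite !inE => /orP [/eqP ->|/orP [/eqP ->|/orP [/eqP ->|/orP [/eqP ->|/eqP ->]]]]; tauto.
have N2 : [set y | e x2 y] = [set x1; x3].
  have [w [Hw1 N2]] := other (Hd x2) (z := x1) ltac:(by rewrite inE esy).
  have Ew : e x2 w by rewrite eN N2 !inE eqxx orbT.
  case: (Hall w) => [E|[E|[E|[E|E]]]]; subst w => //.
  - by move: Ew; rewrite esy eN N0 !inE ?D01 ?D02 ?D03 ?D04 ?D10 ?D12 ?D13 ?D14 ?D20 ?D21 ?D23 ?D24 ?D30 ?D31 ?D32 ?D34 ?D40 ?D41 ?D42 ?D43.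
  - by rewrite eqxx in Hw1.
  - by rewrite eirr in Ew.
  - by move: Ew; rewrite esy eN N4 !inE ?D01 ?D02 ?D03 ?D04 ?D10 ?D12 ?D13 ?D14 ?D20 ?D21 ?D23 ?D24 ?D30 ?D31 ?D32 ?D34 ?D40 ?D41 ?D42 ?D43.
have N3 : [set y | e x3 y] = [set x4; x2].
  apply: two_set; [exact: Hd | by rewrite inE esy e43 | | by rewrite eq_sym d24].
  by rewrite inE esy eN N2 !inE eqxx orbT.
pose f (x : T) : 'I_5 := inord (if x == x0 then 0 else if x == x1 then 1 else if x == x2 then 2 else if x == x3 then 3 else 4).
pose g (i : 'I_5) : T := nth x0 [:: x0; x1; x2; x3; x4] i.
exists f; split.
  exists g.
    move=> x; case: (Hall x) => [->|[->|[->|[->|->]]]]; rewrite /f /g ?eqxx ?D01 ?D02 ?D03 ?D04 ?D10 ?D12 ?D13 ?D14 ?D20 ?D21 ?D23 ?D24 ?D30 ?D31 ?D32 ?D34 ?D40 ?D41 ?D42 ?D43 /= inordK //.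
  move=> [[|[|[|[|[|m]]]]] Hm] //; apply: val_inj; rewrite /f /g /= ?eqxx ?D01 ?D02 ?D03 ?D04 ?D10 ?D12 ?D13 ?D14 ?D20 ?D21 ?D23 ?D24 ?D30 ?D31 ?D32 ?D34 ?D40 ?D41 ?D42 ?D43 /= inordK //.
move=> x y; case: (Hall x) => [->|[->|[->|[->|->]]]]; case: (Hall y) => [->|[->|[->|[->|->]]]];
  rewrite eN ?N0 ?N1 ?N2 ?N3 ?N4 !inE /f ?eqxx ?D01 ?D02 ?D03 ?D04 ?D10 ?D12 ?D13 ?D14 ?D20 ?D21 ?D23 ?D24 ?D30 ?D31 ?D32 ?D34 ?D40 ?D41 ?D42 ?D43 /= /c5 !inordK //.
Qed.

End C5.


Ltac fin5 := apply/forallP; case => [[|[|[|[|[|?]]]]] ?] //; apply/forallP; case => [[|[|[|[|[|?]]]]] ?] //=;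
  apply/existsP; first [exists (@Ordinal 5 0 isT); by [] | exists (@Ordinal 5 1 isT); by [] |
   exists (@Ordinal 5 2 isT); by [] | exists (@Ordinal 5 3 isT); by [] | exists (@Ordinal 5 4 isT); by []].

Section I.
Variable T : finType.

Lemma iso_ub (e : rel T) (r : rel 'I_5) f g : cancel f g -> cancel g f ->
  (forall x y, e x y = r (f x) (f y)) ->
  [forall a, forall b, (a == b) || r a b || [exists m, r a m && r m b]] -> burning_number e <= 3.
Proof.
move=> fK gK Ee H; apply: (cover3 (u := g ord0)) => w.
move/forallP: H => /(_ (f (g ord0))) /forallP /(_ (f w)) /orP [/orP [/eqP H|H]|/existsP [m /andP [H1 H2]]].
- rewrite -(can_inj fK H); apply: in_spread_B; apply: in_spread_B; exact: set11.
- by apply: in_spread_B; apply: (in_spread_e (x := g ord0)); [exact: set11 | rewrite Ee].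
- apply: (in_spread_e (x := g m)); last by rewrite Ee (gK m).
  by apply: (in_spread_e (x := g ord0)); [exact: set11 | rewrite Ee (gK m)].
Qed.

Lemma iso_lb (e : rel T) (r : rel 'I_5) f g : cancel f g -> cancel g f ->
  (forall x y, e x y = r (f x) (f y)) -> 3 <= #|T| ->
  [forall a, forall b, exists c, (c != a) && ~~ r a c && (c != b)] -> 3 <= burning_number e.
Proof.
move=> fK gK Ee H3 H; apply: lb3 => // x y.
move/forallP: H => /(_ (f x)) /forallP /(_ (f y)) /existsP [c /andP [/andP [Hca Hr] Hcb]].
exists (g c); split.
  apply/spreadP => [[H|[z Hz He]]].
    by move: Hca; rewrite inE in H; rewrite -(eqP H) gK eqxx.
  by move: Hr; rewrite inE in Hz; rewrite -(eqP Hz) -[c](gK c) -Ee He.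
by apply: contra Hcb => /eqP <-; rewrite gK.
Qed.

Lemma iso_back (e : rel T) : iso_C5 e ->
  burning_number e * burning_number (compl e) = #|T| + 4.
Proof.
case=> f [[g fK gK] Ef].
have H5 : #|T| = 5 by rewrite (bij_eq_card (Bijective fK gK)) card_ord.
pose r' := fun a b : 'I_5 => (a != b) && ~~ c5 a b.
have Ec : forall x y, compl e x y = r' (f x) (f y).
  by move=> x y; rewrite /compl /r' Ef (inj_eq (can_inj fK)).
have B1 : burning_number e <= 3 by apply: (iso_ub fK gK Ef); fin5.
have B2 : 3 <= burning_number e by apply: (iso_lb fK gK Ef); [rewrite H5 | fin5].
have C1 : burning_number (compl e) <= 3 by apply: (iso_ub fK gK Ec); fin5.
have C2 : 3 <= burning_number (compl e) by apply: (iso_lb fK gK Ec); [rewrite H5 | fin5].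
have -> : burning_number e = 3 by apply/eqP; rewrite eqn_leq B1 B2.
have -> : burning_number (compl e) = 3 by apply/eqP; rewrite eqn_leq C1 C2.
by rewrite H5.
Qed.

End I.


Lemma diam2 (T : finType) (e : rel T) u :
  (forall w, ~~ ((u != w) && ~~ e u w && [forall m, ~~ (e u m && e m w)])) -> burning_number e <= 3.
Proof.
move=> H; apply: (cover3 (u := u)) => w.
case: (eqVneq u w) => [<-|Huw]; first by do 2 apply: in_spread_B; rewrite set11.
case: (boolP (e u w)) => Hew.
  by apply: in_spread_B; apply: (in_spread_e (x := u)); rewrite ?set11.
move: (H w); rewrite Huw Hew /= negb_forall => /existsP [m]; rewrite negbK => /andP [H1 H2].
apply: (in_spread_e (x := m)) => //.
by apply: (in_spread_e (x := u)); rewrite ?set11.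
Qed.

Lemma main_part (T : finType) (e : rel T) :
  symmetric e -> irreflexive e ->
  gconnected e -> gconnected (compl e) ->
  burning_number e * burning_number (compl e) <= #|T| + 4 /\
  (burning_number e * burning_number (compl e) = #|T| + 4 -> iso_C5 e).
Proof.
move=> esy eirr Hc Hcc.
have csy : symmetric (compl e) by move=> x y; rewrite /compl eq_sym esy.
have cirr : irreflexive (compl e) by move=> x; rewrite /compl eqxx.
have Hc1 : forall x y, x != y -> e x y || compl e x y by move=> x y H; rewrite /compl H; case: (e x y).
have Hc2 : forall x y, x != y -> compl e x y || e x y by move=> x y H; rewrite orbC Hc1.
have HB0 := bn_le_card e; have HC0 := bn_le_card (compl e).
move: HB0 HC0; set B := burning_number e; set C := burning_number (compl e) => HB0 HC0.
case: (posnP #|T|) => [H0|Hn].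
  have -> : B = 0 by apply/eqP; rewrite -leqn0 -H0.
  by rewrite mul0n H0.
have /card_gt0P [x0 _] := Hn.
case: (eqVneq #|T| 1) => [H1|H1].
  have HB : B <= 1 by apply: (ub x0 esy Hc); left; rewrite H1.
  have HC : C <= 1 by apply: (ub x0 csy Hcc); left; rewrite H1.
  have := leq_mul HB HC; rewrite H1; lia.
case: (boolP [exists x, #|[set y | e x y]| <= 1]) => [/existsP [x Hx]|HA].
  have HC : C <= 2 by apply: (low_deg (x := x) Hc1) => //; lia.
  have HB : B <= (#|T| + 4) %/ 3 by apply: (ub x0 esy Hc); left; lia.
  have := leq_mul HB HC; lia.
case: (boolP [exists x, #|[set y | compl e x y]| <= 1]) => [/existsP [x Hx]|HB'].
  have HB : B <= 2 by apply: (low_deg (x := x) Hc2) => //; lia.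
  have HC : C <= (#|T| + 4) %/ 3 by apply: (ub x0 csy Hcc); left; lia.
  have := leq_mul HB HC; lia.
have Da : forall x, 2 <= #|[set y | e x y]|.
  by move=> x; move: HA; rewrite negb_exists => /forallP /(_ x); rewrite -ltnNge.
have Db : forall x, 2 <= #|[set y | compl e x y]|.
  by move=> x; move: HB'; rewrite negb_exists => /forallP /(_ x); rewrite -ltnNge.
have Hn5 : 5 <= #|T|.
  have := deg_sum x0 eirr; have := Da x0; have := Db x0; lia.
case: (boolP [exists u, exists v, (u != v) && ~~ e u v && [forall w, ~~ (e u w && e w v)]])
  => [/existsP [u /existsP [v /andP [/andP [Huv Hnuv] /forallP Hw]]]|HC1].
  have HC : C <= 3 by apply: (diam3 Hc1 esy csy Huv Hnuv Hw).
  have H6 : 6 <= #|T| by apply: (far6 esy eirr Huv Hnuv Hw (Da u) (Da v)).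
  have HB : B <= (#|T| + 3) %/ 3 by apply: (ub x0 esy Hc); right; lia.
  have := leq_mul HB HC; lia.
case: (boolP [exists u, exists v, (u != v) && ~~ compl e u v && [forall w, ~~ (compl e u w && compl e w v)]])
  => [/existsP [u /existsP [v /andP [/andP [Huv Hnuv] /forallP Hw]]]|HC2].
  have HB : B <= 3 by apply: (diam3 Hc2 csy esy Huv Hnuv Hw).
  have H6 : 6 <= #|T| by apply: (far6 csy cirr Huv Hnuv Hw (Db u) (Db v)).
  have HC : C <= (#|T| + 3) %/ 3 by apply: (ub x0 csy Hcc); right; lia.
  have := leq_mul HB HC; lia.
have HB : B <= 3.
  apply: (diam2 (u := x0)) => w; move: HC1; rewrite negb_exists => /forallP /(_ x0).
  by rewrite negb_exists => /forallP /(_ w).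
have HC : C <= 3.
  apply: (diam2 (u := x0)) => w; move: HC2; rewrite negb_exists => /forallP /(_ x0).
  by rewrite negb_exists => /forallP /(_ w).
have := leq_mul HB HC; split; first by lia.
move=> Heq; have H5 : #|T| = 5 by lia.
apply: c5_build => // x; have := deg_sum x eirr; have := Da x; have := Db x; lia.
Qed.

Theorem theorem2 (T : finType) (e : rel T) :
  symmetric e -> irreflexive e ->
  gconnected e -> gconnected (compl e) ->
  burning_number e * burning_number (compl e) <= #|T| + 4 /\
  (burning_number e * burning_number (compl e) = #|T| + 4 <-> iso_C5 e).
Proof.
move=> esy eirr Hc Hcc; have [H1 H2] := main_part esy eirr Hc Hcc.
split => //; split => //; exact: iso_back.
Qed.
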